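(* Let $M=\langle\mathbf{V},\mathbf{U},\mathcal{F},P\rangle$ be an SCM with causal diagram $\mathcal{G}$. For any $\mathbf{i}\in\mathbf{I}$, $$P\Big(\bigcap_{V\in\mathbf{V}}\mathcal{U}_V^{(i_V)}\Big)=\prod_{\mathbf{C}\in\mathcal{C}(\mathcal{G})}P\Big(\bigcap_{V\in\mathbf{C}}\mathcal{U}_V^{(i_V)}\Big).$$
   Context: An SCM $M$: finite endogenous $\mathbf{V}$ with finite domains; mutually independent exogenous $\mathbf{U}$ with arbitrary probability spaces and product measure $P$; functions $v\gets f_V(pa_V,u_V)$, $PA_V\subseteq\mathbf{V}$, $U_V\subseteq\mathbf{U}$; causal diagram $\mathcal{G}$ with nodes $\mathbf{V}\cup\mathbf{U}$ and arrows from $PA_V\cup U_V$ into $V$, acyclic. For each $V$, enumerate all functions $\Omega_{PA_V}\to\Omega_V$ as $h_V^{(1)},\dots,h_V^{(m_V)}$, set $\mathbf{I}_V=\{1,\dots,m_V\}$, $\mathcal{U}_V^{(i)}=\{u_V\in\Omega_{U_V}:f_V(\cdot,u_V)=h_V^{(i)}\}$ (viewed as an event on $\mathbf{U}$), and $\mathbf{I}=\times_{V}\mathbf{I}_V$ with components $i_V$. For $U\in\mathbf{U}$, $\mathbf{C}(U)$ is the set of all $V\in\mathbf{V}$ for which there is a sequence $U_1=U,\dots,U_n\in\mathbf{U}$ with $U_n\in U_V$ and each consecutive pair $U_i,U_{i+1}$ having a common child in $\mathcal{G}$; $\mathcal{C}(\mathcal{G})$ is the collection of these maximal c-components $\{\mathbf{C}(U):U\in\mathbf{U}\}$.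 *)

(* Defs.v *)
From HB Require Import structures.
From mathcomp Require Import all_boot all_order all_algebra.
From mathcomp Require Import all_classical all_reals all_analysis.

Unset Printing Implicit Defensive.

Import Order.TTheory GRing.Theory Num.Theory.
Local Open Scope classical_set_scope.

Definition par_assign {Vt : finType} (dom : Vt -> finType)
  (pa : Vt -> {set Vt}) (v : Vt) : finType :=
  {dffun forall w : {x : Vt | x \in pa v}, dom (val w)}.

Definition exo_assign {Ut : finType} (TU : Ut -> Type) (S : {set Ut}) : Type :=
  forall u : {x : Ut | x \in S}, TU (val u).

Definition cylinders {Ut : finType} {dU : Ut -> measure_display}
  (TU : forall u, measurableType (dU u)) (S : {set Ut}) :
  set (set (exo_assign TU S)) :=
  [set B | exists A : forall u : {x : Ut | x \in S}, set (TU (val u)),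
     (forall u, measurable (A u)) /\ B = [set x | forall u, A u (x u)]].

Definition prod_measurable {Ut : finType} {dU : Ut -> measure_display}
  (TU : forall u, measurableType (dU u)) (S : {set Ut})
  (B : set (exo_assign TU S)) : Prop :=
  <<s cylinders TU S >> B.

Definition mutually_independent {R : realType} {d : measure_display}
  {Omega : measurableType d} (P : probability Omega R)
  {Ut : finType} {dU : Ut -> measure_display}
  {TU : forall u, measurableType (dU u)} (X : forall u, Omega -> TU u) : Prop :=
  forall A : forall u, set (TU u), (forall u, measurable (A u)) ->
    P [set w | forall u, A u (X u w)] = (\prod_(u : Ut) P (X u @^-1` A u))%E.

(* acyclicity of the endogenous part of the causal diagram
   (edges x -> y iff x \in pa y; edges from U into V cannot create cycles) *)
Definition acyclic_pa {Vt : finType} (pa : Vt -> {set Vt}) : Prop :=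
  forall v w, w \in pa v -> ~~ connect (fun x y => x \in pa y) v w.

Definition common_child {Vt Ut : finType} (uV : Vt -> {set Ut}) : rel Ut :=
  fun u u' => [exists v, (u \in uV v) && (u' \in uV v)].

Definition ccomp {Vt Ut : finType} (uV : Vt -> {set Ut}) (u : Ut) : {set Vt} :=
  [set v | [exists u', connect (common_child uV) u u' && (u' \in uV v)]].

(* the collection C(G) of maximal c-components *)
Definition ccomps {Vt Ut : finType} (uV : Vt -> {set Ut}) : {set {set Vt}} :=
  [set ccomp uV u | u : Ut].

(* the event  U_V^{(h)} = { f_V(., u_V) = h }, seen as an event on Omega *)
Definition resp_event {d : measure_display}
  {Omega : measurableType d}
  {Vt Ut : finType} {dom : Vt -> finType} {pa : Vt -> {set Vt}}
  {uV : Vt -> {set Ut}} {dU : Ut -> measure_display}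
  {TU : forall u, measurableType (dU u)} (X : forall u, Omega -> TU u)
  (f : forall v, par_assign dom pa v -> exo_assign TU (uV v) -> dom v)
  (v : Vt) (h : {ffun par_assign dom pa v -> dom v}) : set Omega :=
  [set w | [ffun p : par_assign dom pa v => f v p (fun u => X (val u) w)] = h].

(* Main.v *)
Require Import Defs.
From HB Require Import structures.
From mathcomp Require Import all_boot all_order all_algebra.
From mathcomp Require Import all_classical all_reals all_analysis.
Local Open Scope classical_set_scope.


Section Comps.
Context (Vt Ut : finType) (uV : Vt -> {set Ut}).

Definition SC (C : {set Vt}) : {set Ut} := \bigcup_(v in C) uV v.

Lemma cc_sym : symmetric (common_child uV).
Proof.
move=> a b; rewrite /common_child; apply/existsP/existsP => -[v];
  by rewrite andbC; exists v.
Qed.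

Lemma ccomp_conn a b : connect (common_child uV) a b -> ccomp uV a = ccomp uV b.
Proof.
move=> ab; apply/setP => v; rewrite !inE.
apply/existsP/existsP => -[w /andP[c1 w1]]; exists w; rewrite w1 andbT.
  by apply: (connect_trans _ c1); rewrite (sym_connect_sym cc_sym).
exact: connect_trans ab c1.
Qed.

Lemma in_ccomp a v u : v \in ccomp uV a -> u \in uV v ->
  connect (common_child uV) a u.
Proof.
rewrite inE => /existsP[w /andP[aw wv]] uv.
apply: connect_trans aw (connect1 _).
by apply/existsP; exists v; rewrite wv uv.
Qed.

Lemma mem_ccomp u v : u \in uV v -> v \in ccomp uV u.
Proof. by move=> uv; rewrite inE; apply/existsP; exists u; rewrite connect0 uv. Qed.

Lemma SC_disj C1 C2 : C1 \in ccomps uV -> C2 \in ccomps uV -> C1 != C2 ->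
  forall u, u \in SC C1 -> u \notin SC C2.
Proof.
move=> /imsetP[a _ ->] /imsetP[b _ ->] neq u.
move=> /bigcupP[v1 v1C uv1]; apply/negP => /bigcupP[v2 v2C uv2].
move/negP: neq; apply; apply/eqP; apply: ccomp_conn.
apply: (@connect_trans _ _ u a b (in_ccomp _ _ _ v1C uv1)).
by rewrite (sym_connect_sym cc_sym); exact: (in_ccomp _ _ _ v2C uv2).
Qed.

End Comps.
Arguments SC {Vt Ut}.
Arguments SC_disj {Vt Ut uV C1 C2}.
Arguments mem_ccomp {Vt Ut uV u v}.

Section Indep.
Local Open Scope ereal_scope.
Context (R : realType) (Ut : finType) (dU : Ut -> measure_display)
  (TU : forall u, measurableType (dU u))
  (d : measure_display) (Omega : measurableType d) (P : probability Omega R)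
  (X : forall u, Omega -> TU u).
Hypothesis measX : forall u, measurable_fun setT (X u).
Hypothesis indep : mutually_independent P X.

Definition rect (S : {set Ut}) : set (set Omega) :=
  [set E | exists A : forall u, set (TU u), (forall u, measurable (A u)) /\
     (forall u, u \notin S -> A u = setT) /\ E = [set w | forall u, A u (X u w)]].

Lemma rect_meas S E : rect S E -> measurable E.
Proof.
move=> [A [mA [_ ->]]].
have -> : [set w | forall u, A u (X u w)] = \bigcap_(u in [set: Ut]) (X u @^-1` A u).
  by apply/seteqP; split => [w Hw u _|w Hw u]; [exact: Hw|exact: Hw].
apply: fin_bigcap_measurable; first exact: finite_finset.
by move=> u _; have := measX u measurableT _ (mA u); rewrite setTI.
Qed.

Lemma rect_setT S : rect S setT.
Proof.
exists (fun=> setT); split => //; split => //.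
by apply/seteqP; split.
Qed.

Lemma rect_mono (S S' : {set Ut}) : S \subset S' -> rect S `<=` rect S'.
Proof.
move=> sub E [A [mA [AS ->]]]; exists A; split => //; split => // u uS.
apply: AS; apply: contraNN uS => h; exact: (fintype.subsetP sub u h).
Qed.

Lemma rect_setI S : setI_closed (rect S).
Proof.
move=> E F [A [mA [AS ->]]] [B [mB [BS ->]]].
exists (fun u => A u `&` B u); split; first by move=> u; exact: measurableI.
split; first by move=> u uS; rewrite AS // BS // setIT.
by apply/seteqP; split => [w [H1 H2] u|w H]; [split|split => u; have [] := H u].
Qed.

Lemma indep_rect (S T : {set Ut}) E F : (forall u, u \in S -> u \notin T) ->
  rect S E -> rect T F -> P (E `&` F) = P E * P F.
Proof.
move=> dST [A [mA [AS ->]]] [B [mB [BS ->]]].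
have -> : [set w | forall u, A u (X u w)] `&` [set w | forall u, B u (X u w)] =
   [set w | forall u, (A u `&` B u) (X u w)].
  by apply/seteqP; split => [w [H1 H2] u|w H]; [split|split => u; have [] := H u].
rewrite (indep _ mA) (indep _ mB) (indep (fun u => A u `&` B u)); last by move=> u; exact: measurableI.
rewrite -big_split /=; apply: eq_bigr => u _.
have [uS|uS] := boolP (u \in S).
  rewrite (BS u (dST u uS)) setIT preimage_setT probability_setT mule1 //.
by rewrite (AS u uS) setTI preimage_setT probability_setT mul1e.
Qed.

Lemma sig_bigcap (G : set (set Omega)) (I : finType) (D : set I) (F : I -> set Omega) :
  (forall i, D i -> <<s G >> (F i)) -> <<s G >> (\bigcap_(i in D) F i).
Proof.
move=> H.
exact: (@fin_bigcap_measurable _ (g_sigma_algebraType G) I D F finite_finset H).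
Qed.

Lemma sig_setI (G : set (set Omega)) A B :
  <<s G >> A -> <<s G >> B -> <<s G >> (A `&` B).
Proof.
move=> HA HB.
exact: (@measurableI _ (g_sigma_algebraType G) A B HA HB).
Qed.

Lemma sig_mono (S S' : {set Ut}) : S \subset S' -> <<s rect S >> `<=` <<s rect S' >>.
Proof.
move=> sub; apply: sub_smallest2r; first exact: smallest_sigma_algebra.
exact: rect_mono.
Qed.

Lemma sig_meas S : <<s rect S >> `<=` measurable.
Proof.
apply: smallest_sub; first exact: sigma_algebra_measurable.
exact: rect_meas.
Qed.

Lemma fin_P (A : set Omega) : measurable A -> P A \is a fin_num.
Proof. by move=> mA; exact: fin_num_measure. Qed.

Lemma indep_sigma1 (S T : {set Ut}) E F : (forall u, u \in S -> u \notin T) ->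
  <<s rect S >> E -> rect T F -> P (E `&` F) = P E * P F.
Proof.
move=> dST HE HF.
have mF : measurable F := @rect_meas _ _ HF.
pose r : {nonneg R}%R := NngNum (fine_ge0 (measure_ge0 P F)).
have cover : \bigcup_(k : nat) setT = [set: Omega].
  by apply/seteqP; split => // x _; exists 0%N.
have agree : forall A, rect S A -> mrestr P mF A = mscale r P A.
  move=> A HA; rewrite /mrestr /mscale /= fineK ?fin_P // muleC.
  exact: indep_rect HA HF.
have fin : forall k : nat, mrestr P mF setT < +oo.
  by move=> _; rewrite /mrestr setTI ltey; have := fin_P _ mF; rewrite fin_numE => /andP[].
have := @g_sigma_algebra_measure_unique _ R Omega (rect S) (@rect_meas S)
  (fun=> setT) (fun=> rect_setT S) cover (mrestr P mF) (mscale r P) (rect_setI S)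
  agree fin E HE.
by move=> H; transitivity (mrestr P mF E) => //; rewrite H /mscale; change ((fine (P F))%:E * P E = P E * P F); rewrite fineK ?fin_P // muleC.
Qed.

Lemma indep_sigma (S T : {set Ut}) E F : (forall u, u \in S -> u \notin T) ->
  <<s rect S >> E -> <<s rect T >> F -> P (E `&` F) = P E * P F.
Proof.
move=> dST HE HF.
have mE : measurable E := @sig_meas _ _ HE.
pose r : {nonneg R}%R := NngNum (fine_ge0 (measure_ge0 P E)).
have cover : \bigcup_(k : nat) setT = [set: Omega].
  by apply/seteqP; split => // x _; exists 0%N.
have agree : forall A, rect T A -> mrestr P mE A = mscale r P A.
  move=> A HA; rewrite /mrestr /mscale /= fineK ?fin_P // setIC.
  exact: indep_sigma1 HE HA.
have fin : forall k : nat, mrestr P mE setT < +oo.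
  by move=> _; rewrite /mrestr setTI ltey; have := fin_P _ mE; rewrite fin_numE => /andP[].
have := @g_sigma_algebra_measure_unique _ R Omega (rect T) (@rect_meas T)
  (fun=> setT) (fun=> rect_setT T) cover (mrestr P mE) (mscale r P) (rect_setI T)
  agree fin F HF.
by move=> H; rewrite setIC; transitivity (mrestr P mE F) => //; rewrite H /mscale; change ((fine (P E))%:E * P F = P E * P F); rewrite fineK ?fin_P.
Qed.


Definition ext (S : {set Ut}) (A : forall u : {x | x \in S}, set (TU (val u)))
  (u : Ut) : set (TU u) :=
  match pselect (u \in S) with left h => A (exist _ u h) | right _ => setT end.
Arguments ext {S}.

Lemma extE (S : {set Ut}) A u (h : u \in S) : ext A u = A (exist _ u h).
Proof.
rewrite /ext; case: (pselect (u \in S)) => [h'|h']; first by rewrite (bool_irrelevance h' h).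
by exfalso; apply: h'.
Qed.

Lemma extN (S : {set Ut}) (A : forall u : {x | x \in S}, set (TU (val u))) u : u \notin S -> ext A u = setT.
Proof.
move=> uS; rewrite /ext; case: (pselect (u \in S)) => [h'|//].
by rewrite h' in uS.
Qed.

Lemma preimage_prod (S : {set Ut}) B : prod_measurable TU S B ->
  <<s rect S >> ((fun w (u : {x | x \in S}) => X (val u) w) @^-1` B).
Proof.
move=> HB.
have : <<s setT, cylinders TU S >> `<=`
  image_set_system setT (fun w (u : {x | x \in S}) => X (val u) w) <<s rect S >>.
  apply: smallest_sub; first exact/sigma_algebra_image/smallest_sigma_algebra.
  move=> _ [A [mA ->]]; rewrite /image_set_system /=; apply: sub_sigma_algebra.
  exists (ext A); split.
    move=> u; rewrite /ext; case: (pselect (u \in S)) => [h|_] //; exact: mA.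
  split; first by move=> u; exact: extN.
  apply/seteqP; split => w /=.
    move=> [_ H] u; have [h|h] := boolP (u \in S); last by rewrite extN.
    by rewrite (extE _ A _ h); exact: (H (exist _ u h)).
  by move=> H; split => // -[x hx]; have := H x; rewrite (extE _ A _ hx).
by move=> /(_ _ HB); rewrite /image_set_system /=; congr (<<s rect S >> _); apply/seteqP; split => w // [].
Qed.

Lemma resp_sig (Vt : finType) (dom : Vt -> finType) (pa : Vt -> {set Vt})
  (uV : Vt -> {set Ut})
  (f : forall v, par_assign dom pa v -> exo_assign TU (uV v) -> dom v) :
  (forall v (p : par_assign dom pa v) (x : dom v),
      prod_measurable TU (uV v) [set e | f v p e = x]) ->
  forall v h, <<s rect (uV v) >> (resp_event X f v h).
Proof.
move=> Hf v h.
have -> : resp_event X f v h = \bigcap_(p in [set: par_assign dom pa v])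
   ((fun w (u : {x | x \in uV v}) => X (val u) w) @^-1` [set e | f v p e = h p]).
  apply/seteqP; split => w /= Hw.
    by move=> p _ /=; rewrite -Hw ffunE.
  by apply/ffunP => p; rewrite ffunE; exact: (Hw p I).
apply: sig_bigcap => p _; apply: preimage_prod; exact: Hf.
Qed.

Lemma main_gen (Vt : finType) (dom : Vt -> finType) (pa : Vt -> {set Vt})
  (uV : Vt -> {set Ut})
  (f : forall v, par_assign dom pa v -> exo_assign TU (uV v) -> dom v) :
  (forall v (p : par_assign dom pa v) (x : dom v),
      prod_measurable TU (uV v) [set e | f v p e = x]) ->
  forall i : (forall v, {ffun par_assign dom pa v -> dom v}),
  forall s : seq {set Vt}, uniq s -> {subset s <= ccomps uV} ->
  <<s rect (\bigcup_(C <- s) SC uV C) >>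
     (\bigcap_(C in [set C | C \in s])
        \bigcap_(v in [set v | v \in C]) resp_event X f v (i v)) /\
  P (\bigcap_(C in [set C | C \in s])
        \bigcap_(v in [set v | v \in C]) resp_event X f v (i v))
  = \prod_(C <- s) P (\bigcap_(v in [set v | v \in C]) resp_event X f v (i v)).
Proof.
move=> Hf i; set EC := fun C : {set Vt} => \bigcap_(v in [set v | v \in C]) resp_event X f v (i v).
elim=> [|C s IH] /=.
  move=> _ _.
  have -> : \bigcap_(C in [set C | C \in [::]]) EC C = setT.
    by apply/seteqP; split => // w _ C; rewrite /= in_nil.
  split; first by apply: sub_sigma_algebra; exact: rect_setT.
  by rewrite big_nil probability_setT.
move=> /andP[Cs us] sub.
have sub' : {subset s <= ccomps uV}.
  by move=> x h; apply: sub; rewrite inE h orbT.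
have [IH1 IH2] := IH us sub'.
have -> : \bigcap_(C' in [set C' | C' \in C :: s]) EC C' =
    EC C `&` \bigcap_(C' in [set C' | C' \in s]) EC C'.
  apply/seteqP; split => w H.
    split; first by apply: H; rewrite /= inE eqxx.
    by move=> C' /= h; apply: H; rewrite /= inE h orbT.
  by move=> C' /=; rewrite inE => /orP[/eqP->|h]; [exact: H.1|exact: H.2 C' h].
have ECsig : <<s rect (SC uV C) >> (EC C).
  apply: sig_bigcap => v /= vC; apply: (@sig_mono (uV v)); last exact: resp_sig.
  by rewrite /SC; apply: (finset.bigcup_sup v).
rewrite !big_cons; split.
  apply: sig_setI.
    by apply: (@sig_mono (SC uV C)) => //; exact: finset.subsetUl.
  by apply: (@sig_mono (\bigcup_(j <- s) SC uV j)) => //; exact: finset.subsetUr.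
have dST : forall u, u \in SC uV C -> u \notin \bigcup_(j <- s) SC uV j.
  move=> u uC; rewrite finset.bigcup_seq; apply/negP => /finset.bigcupP[C' C's uC'].
  have CC' : C != C' by apply: contraNneq Cs => ->.
  have C'in : C' \in ccomps uV by apply: sub; rewrite inE C's orbT.
  have := SC_disj (sub C (mem_head _ _)) C'in CC' _ uC.
  by rewrite uC'.
by rewrite (indep_sigma _ _ _ _ dST ECsig IH1) IH2.
Qed.

End Indep.

Theorem lemma4 (R : realType) (Vt Ut : finType) (dom : Vt -> finType)
  (pa : Vt -> {set Vt}) (uV : Vt -> {set Ut})
  (dU : Ut -> measure_display) (TU : forall u, measurableType (dU u))
  (d : measure_display) (Omega : measurableType d) (P : probability Omega R)
  (X : forall u, Omega -> TU u)
  (f : forall v, par_assign dom pa v -> exo_assign TU (uV v) -> dom v) :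
  acyclic_pa pa ->
  (forall v, uV v != finset.set0) ->
  (forall u, measurable_fun setT (X u)) ->
  mutually_independent P X ->
  (forall v (p : par_assign dom pa v) (x : dom v),
      prod_measurable TU (uV v) [set e | f v p e = x]) ->
  forall i : (forall v, {ffun par_assign dom pa v -> dom v}),
  P (\bigcap_(v in [set: Vt]) resp_event X f v (i v))
  = (\prod_(C in ccomps uV)
       P (\bigcap_(v in [set v | v \in C]) resp_event X f v (i v)))%E.
Proof.
move=> _ nonempty measX indep Hf i.
have sub : {subset enum (ccomps uV) <= ccomps uV} by move=> x; rewrite mem_enum.
have [_ H] := @main_gen R Ut dU TU d Omega P X measX indep Vt dom pa uV f Hf i
  (enum (ccomps uV)) (enum_uniq _) sub.
rewrite -big_enum -H; congr (P _); apply/seteqP; split => w Hw.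
  by move=> C _ v _; exact: Hw v I.
move=> v _; have /finset.set0Pn [u uv] := nonempty v.
apply: (Hw (ccomp uV u)); first by rewrite /= mem_enum; apply/imsetP; exists u.
by rewrite /= (mem_ccomp uv).
Qed.
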